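(* Let $\mathcal L$ be a linearly ordered non-discrete MV-algebra. Let $\mathcal F_1\subseteq\mathcal F_2\subseteq\mathcal G$ be filters (in the sense below) with $|\mathcal F_2\setminus\mathcal F_1|\ge 2$. Then $$\mathcal F_1\sqsubseteq\!\!\to\mathcal G\neq\mathcal F_2\sqsubseteq\!\!\to\mathcal G.$$
   Context: $\mathcal L=(L,\oplus,\lnot,0)$ is a linearly ordered MV-algebra. We write $1=\lnot0$, $x\otimes y=\lnot(\lnot x\oplus\lnot y)$, and $x\to y=\lnot x\oplus y$. Non-discrete means no element has an immediate successor or an immediate predecessor. In this setting a ''filter'' means a nonempty proper upward-closed subset $\mathcal F$ of $L$ whose kernel $\mathcal K(\mathcal F)=\{z:\forall a\notin\mathcal F,\ z\to a\notin\mathcal F\}$ equals $\{1\}$. For a filter $\mathcal F$ and $a\in L$, let $\mathcal F_a=\{z: z\to a\notin\mathcal F\}$. For $\mathcal F\subseteq\mathcal G$ we put $\mathcal F\sqsubseteq\!\!\to\mathcal G=\bigcap_{a\in L\setminus\mathcal G}\mathcal F_a$. *)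

(* Defs.v *)
From Stdlib Require Import Classical.
Set Implicit Arguments.

Record MVAlgebra := {
  mv_car :> Type;
  mv_oplus : mv_car -> mv_car -> mv_car;
  mv_neg : mv_car -> mv_car;
  mv_zero : mv_car;
  mv_assoc : forall x y z, mv_oplus x (mv_oplus y z) = mv_oplus (mv_oplus x y) z;
  mv_comm : forall x y, mv_oplus x y = mv_oplus y x;
  mv_zero_r : forall x, mv_oplus x mv_zero = x;
  mv_negneg : forall x, mv_neg (mv_neg x) = x;
  mv_one_absorb : forall x, mv_oplus x (mv_neg mv_zero) = mv_neg mv_zero;
  mv_luk : forall x y,
    mv_oplus (mv_neg (mv_oplus (mv_neg x) y)) y =
    mv_oplus (mv_neg (mv_oplus (mv_neg y) x)) x
}.

Section MVDefs.
Variable L : MVAlgebra.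

Definition mv_one : L := mv_neg L (mv_zero L).
Definition mv_otimes (x y : L) : L :=
  mv_neg L (mv_oplus L (mv_neg L x) (mv_neg L y)).
Definition mv_impl (x y : L) : L := mv_oplus L (mv_neg L x) y.

Definition mv_le (x y : L) : Prop := mv_impl x y = mv_one.
Definition mv_lt (x y : L) : Prop := mv_le x y /\ x <> y.

Definition linearly_ordered : Prop := forall x y : L, mv_le x y \/ mv_le y x.

Definition immediate_successor (x y : L) : Prop :=
  mv_lt x y /\ ~ (exists z, mv_lt x z /\ mv_lt z y).
Definition immediate_predecessor (x y : L) : Prop :=
  mv_lt y x /\ ~ (exists z, mv_lt y z /\ mv_lt z x).

Definition non_discrete : Prop :=
  forall x : L, ~ (exists y, immediate_successor x y) /\
                ~ (exists y, immediate_predecessor x y).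

Definition kernel (F : L -> Prop) : L -> Prop :=
  fun z => forall a, ~ F a -> ~ F (mv_impl z a).

Definition is_filter (F : L -> Prop) : Prop :=
  (exists x, F x) /\ (exists x, ~ F x) /\
  (forall x y, F x -> mv_le x y -> F y) /\
  (forall z, kernel F z <-> z = mv_one).

Definition Fa (F : L -> Prop) (a : L) : L -> Prop :=
  fun z => ~ F (mv_impl z a).

(* F ⊑→ G = ⋂_{a ∉ G} F_a *)
Definition sqimp (F G : L -> Prop) : L -> Prop :=
  fun z => forall a, ~ G a -> Fa F a z.

End MVDefs.
Arguments kernel {L}.
Arguments is_filter {L}.
Arguments Fa {L}.
Arguments sqimp {L}.
Arguments mv_le {L}.
Arguments mv_lt {L}.
Arguments mv_impl {L}.
Arguments mv_otimes {L}.
Arguments mv_one {L}.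

(* Main.v *)
Require Import Defs.
From Stdlib Require Import Classical.

Lemma zero_l (L : MVAlgebra) (x : L) : mv_oplus L (mv_zero L) x = x.
Proof. rewrite mv_comm. apply mv_zero_r. Qed.

Lemma neg_one (L : MVAlgebra) : mv_neg L (@mv_one L) = mv_zero L.
Proof. unfold mv_one. apply mv_negneg. Qed.

Lemma one_l (L : MVAlgebra) (x : L) : mv_oplus L (@mv_one L) x = mv_one.
Proof. rewrite mv_comm. apply mv_one_absorb. Qed.

Lemma swap (L : MVAlgebra) (u v a : L) :
  mv_oplus L u (mv_oplus L v a) = mv_oplus L v (mv_oplus L u a).
Proof. rewrite !mv_assoc. rewrite (mv_comm L u v). reflexivity. Qed.

Lemma impl_eq (L : MVAlgebra) (x y : L) :
  mv_le x y -> mv_oplus L (mv_neg L (mv_impl y x)) x = y.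
Proof.
  unfold mv_le, mv_impl. intro H.
  rewrite <- (mv_luk L x y). rewrite H, neg_one, zero_l. reflexivity.
Qed.

Lemma negself (L : MVAlgebra) (y : L) : mv_oplus L (mv_neg L y) y = mv_one.
Proof.
  pose proof (mv_luk L mv_one y) as H.
  rewrite neg_one, zero_l in H. rewrite H. apply mv_one_absorb.
Qed.

Lemma mono (L : MVAlgebra) (z a b : L) :
  mv_le a b -> mv_le (mv_impl z a) (mv_impl z b).
Proof.
  intro H. pose proof (impl_eq L a b H) as Hb.
  revert Hb. generalize (mv_neg L (mv_impl b a)). intros c Hb. subst b.
  unfold mv_le, mv_impl.
  rewrite (mv_comm L c a), (mv_assoc L (mv_neg L z) a c), mv_assoc, negself. apply one_l.
Qed.

Lemma antisym (L : MVAlgebra) (x y : L) : mv_le x y -> mv_le y x -> x = y.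
Proof.
  intros H1 H2. pose proof (impl_eq L x y H1) as H. unfold mv_le in H2.
  rewrite H2, neg_one, zero_l in H. exact H.
Qed.

Lemma identC (L : MVAlgebra) (a0 x y : L) :
  mv_le a0 x -> mv_le x y ->
  mv_impl (mv_impl x a0) (mv_impl (mv_impl y x) a0) = y.
Proof.
  intros H1 H2. unfold mv_impl at 1 3.
  rewrite swap, (impl_eq L a0 x H1). apply impl_eq. exact H2.
Qed.

Theorem mainTheorem13 (L : MVAlgebra) (F1 F2 G : L -> Prop) :
  linearly_ordered L -> non_discrete L ->
  is_filter F1 -> is_filter F2 -> is_filter G ->
  (forall x, F1 x -> F2 x) -> (forall x, F2 x -> G x) ->
  (exists x y, x <> y /\ F2 x /\ ~ F1 x /\ F2 y /\ ~ F1 y) ->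
  ~ (forall z, sqimp F1 G z <-> sqimp F2 G z).
Proof.
  intros Lin _ HF1 HF2 HG S12 S2G [x0 [y0 [Hne [Hx0 [Hnx0 [Hy0 Hny0]]]]]] Heq.
  destruct HF1 as [_ [_ [Up1 _]]].
  destruct HG as [_ [_ [UpG KG]]].
  assert (Hex : exists x y, mv_le x y /\ x <> y /\ F2 x /\ ~ F1 y).
  { destruct (Lin x0 y0) as [H|H].
    - exists x0, y0. auto.
    - exists y0, x0. auto. }
  clear x0 y0 Hne Hx0 Hnx0 Hy0 Hny0.
  destruct Hex as [x [y [Hxy [Hne [Hx Hny]]]]].
  assert (Hk : ~ kernel G (mv_impl y x)).
  { intro K. apply KG in K. apply Hne. apply antisym; auto. }
  unfold kernel in Hk.
  apply not_all_ex_not in Hk. destruct Hk as [a0 Hk].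
  apply imply_to_and in Hk. destruct Hk as [Ha0 Hk]. apply NNPP in Hk.
  assert (Ha0x : mv_le a0 x).
  { destruct (Lin a0 x) as [H|H]; auto. exfalso. apply Ha0.
    apply (UpG x); auto. }
  set (c := mv_impl (mv_impl y x) a0) in *.
  assert (Hin : sqimp F1 G (mv_impl x a0)).
  { intros a Ha HF. apply Hny.
    assert (Hac : mv_le a c).
    { destruct (Lin a c) as [H|H]; auto. exfalso. apply Ha. apply (UpG c); auto. }
    pose proof (mono L (mv_impl x a0) a c Hac) as Hm.
    unfold c in Hm. rewrite identC in Hm by auto.
    exact (Up1 _ _ HF Hm). }
  apply Heq in Hin. apply (Hin a0 Ha0).
  unfold mv_impl at 1. rewrite (impl_eq L a0 x Ha0x). exact Hx.
Qed.
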